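(* There are universal constants $K,C>0$ such that: fix $\epsilon>0$ with $Kd^3\sqrt\epsilon\leqslant1$; suppose $A\in\mathbb{R}^{m\times n_d}$ satisfies the RRCP with respect to $G$ with constant $\epsilon$ and each $W_i\in\mathbb{R}^{n_i\times n_{i-1}}$ satisfies the WDC with constant $\epsilon$. Then for any $x_*\in\mathbb{R}^k\setminus\{0\}$, $\eta\in\mathbb{R}^m$, any $x\in\mathbb{R}^k\setminus\{0\}$ and any $v_x\in\partial f(x)$, $\|v_x\|\leqslant\frac{Cd}{2^d}\max(\|x\|,\|x_*\|)+\frac{2}{2^{d/2}}\|\eta\|$.
   Context: Network: $k=n_0<\dots<n_d=n$, $G(x)=\mathrm{relu}(W_d\cdots\mathrm{relu}(W_1x)\cdots)$. $W_{+,x}:=\mathrm{diag}(Wx>0)W$. $\theta_{x,y}=\angle(x,y)$, $\hat x=x/\|x\|$, $M_{\hat x\leftrightarrow\hat y}$ the symmetric matrix swapping $\hat x,\hat y$ and vanishing on $\mathrm{span}(x,y)^\perp$ ($\pm\hat x\hat x^\top$ in degenerate cases). WDC with constant $\epsilon$: $\|W_{+,x}^\top W_{+,y}-(\frac{\pi-\theta_{x,y}}{2\pi}I+\frac{\sin\theta_{x,y}}{2\pi}M_{\hat x\leftrightarrow\hat y})\|\leqslant\epsilon$ for all nonzero $x,y$. $A_z:=\mathrm{diag}(\mathrm{sgn}(Az))A$ ($\mathrm{sgn}(0)=0$); $\Phi_{z,w}=\frac{\pi-2\theta_{z,w}}{\pi}I_n+\frac{2\sin\theta_{z,w}}{\pi}M_{\hat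 z\leftrightarrow\hat w}$ for $z,w\neq0$, else $0$. RRCP with constant $\epsilon$: $|\langle(A_{G(x)}^\top A_{G(y)}-\Phi_{G(x),G(y)})(G(x_1)-G(x_2)),G(x_3)-G(x_4)\rangle|\leqslant L\epsilon\|G(x_1)-G(x_2)\|\|G(x_3)-G(x_4)\|$ for all $x,y,x_1,\dots,x_4$, $L=33$. $f(x)=\frac12\||AG(x)|-b_*\|^2$ with $b_*=|AG(x_* )|+\eta$; $\partial f$ is the Clarke generalized subdifferential. *)

(* Defs.v *)
From HB Require Import structures.
From mathcomp Require Import all_boot all_order all_algebra.
From mathcomp Require Import all_classical all_reals.
From mathcomp Require Import trigo.
Set Implicit Arguments.
Unset Strict Implicit.
Unset Printing Implicit Defensive.
Import Order.TTheory GRing.Theory Num.Theory.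
Local Open Scope ring_scope.

Section Defs.
Variable R : realType.

Definition dotv n (u v : 'cV[R]_n) : R := (u^T *m v) 0 0.
Definition normv n (u : 'cV[R]_n) : R := Num.sqrt (dotv u u).

Definition opnorm_le m n (M : 'M[R]_(m, n)) (e : R) : Prop :=
  forall u : 'cV[R]_n, normv (M *m u) <= e * normv u.

Definition angle n (x y : 'cV[R]_n) : R := acos (dotv x y / (normv x * normv y)).

Definition unitv n (x : 'cV[R]_n) : 'cV[R]_n := (normv x)^-1 *: x.

(* M_{x^ <-> y^}: the symmetric matrix mapping x^ to y^ and y^ to x^, vanishing on
   span(x,y)^perp; equal to +- x^ x^^T in the degenerate (collinear) cases. *)
Definition Mswap n (x y : 'cV[R]_n) : 'M[R]_n :=
  let u := unitv x in let w := unitv y in let c := dotv u w in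
  if c == 1 then u *m u^T
  else if c == -1 then - (u *m u^T)
  else (1 - c ^+ 2)^-1 *: ((u *m w^T + w *m u^T) - c *: (u *m u^T + w *m w^T)).

Definition relu n (x : 'cV[R]_n) : 'cV[R]_n := map_mx (fun t => Num.max t 0) x.

(* the network G(x) = relu(W_d ... relu(W_1 x)); layer i+1 uses W i *)
Fixpoint netG (dims : nat -> nat) (W : forall i, 'M[R]_(dims i.+1, dims i)) (j : nat)
  : 'cV[R]_(dims 0) -> 'cV[R]_(dims j) :=
  match j with
  | 0 => fun x => x
  | j'.+1 => fun x => relu (W j' *m netG W j' x)
  end.

Definition Wplus p q (W : 'M[R]_(p, q)) (x : 'cV[R]_q) : 'M[R]_(p, q) :=
  diag_mx (\row_i (if 0 < (W *m x) i 0 then 1 else 0)) *m W.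

Definition Qwdc n (x y : 'cV[R]_n) : 'M[R]_n :=
  ((pi - angle x y) / (2 * pi)) *: 1%:M + (sin (angle x y) / (2 * pi)) *: Mswap x y.

Definition WDC p q (W : 'M[R]_(p, q)) (eps : R) : Prop :=
  forall x y : 'cV[R]_q, x != 0 -> y != 0 ->
    opnorm_le ((Wplus W x)^T *m Wplus W y - Qwdc x y) eps.

Definition Asgn m n (A : 'M[R]_(m, n)) (z : 'cV[R]_n) : 'M[R]_(m, n) :=
  diag_mx (\row_i Num.sg ((A *m z) i 0)) *m A.

Definition Phi n (z w : 'cV[R]_n) : 'M[R]_n :=
  if (z != 0) && (w != 0) then
    ((pi - 2 * angle z w) / pi) *: 1%:M + (2 * sin (angle z w) / pi) *: Mswap z w
  else 0.

(* Range Restricted Concentration Property with constant eps, L = 33 *)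
Definition RRCP m k n (A : 'M[R]_(m, n)) (G : 'cV[R]_k -> 'cV[R]_n) (eps : R) : Prop :=
  forall x y x1 x2 x3 x4 : 'cV[R]_k,
    `| dotv (((Asgn A (G x))^T *m Asgn A (G y) - Phi (G x) (G y)) *m (G x1 - G x2))
            (G x3 - G x4) |
    <= 33 * eps * normv (G x1 - G x2) * normv (G x3 - G x4).

(* Clarke generalized subdifferential (via Clarke's generalized directional derivative):
   xi \in df(x) iff for all v, <xi, v> <= limsup_{y -> x, t \downarrow 0} (f(y+tv)-f(y))/t. *)
Definition clarke_subdiff k (f : 'cV[R]_k -> R) (x xi : 'cV[R]_k) : Prop :=
  forall v : 'cV[R]_k, forall e delta : R, 0 < e -> 0 < delta ->
    exists (y : 'cV[R]_k) (t : R),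
      normv (y - x) < delta /\ 0 < t < delta /\
      dotv xi v - e < (f (y + t *: v) - f y) / t.

Definition absv n (u : 'cV[R]_n) : 'cV[R]_n := map_mx (fun t => `|t|) u.
Definition loss m k n (A : 'M[R]_(m, n)) (G : 'cV[R]_k -> 'cV[R]_n) (b : 'cV[R]_m)
  (x : 'cV[R]_k) : R :=
  2^-1 * normv (absv (A *m G x) - b) ^+ 2.

End Defs.

(* Main.v *)
Require Import Defs.
From HB Require Import structures.
From mathcomp Require Import all_boot all_order all_algebra.
From mathcomp Require Import all_classical all_reals.
From mathcomp Require Import trigo.
From mathcomp Require Import ring lra.
Import Order.TTheory GRing.Theory Num.Theory.
Local Open Scope ring_scope.

Lemma dotvE {R : realType} {n} (u v : 'cV[R]_n) : dotv u v = \sum_i u i 0 * v i 0.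
Proof. by rewrite /dotv !mxE; apply: eq_bigr => i _; rewrite mxE. Qed.

Lemma dotvC {R : realType} {n} (u v : 'cV[R]_n) : dotv u v = dotv v u.
Proof. by rewrite !dotvE; apply: eq_bigr => i _; rewrite mulrC. Qed.

Lemma dotvDl {R : realType} {n} (u v w : 'cV[R]_n) : dotv (u + v) w = dotv u w + dotv v w.
Proof. by rewrite !dotvE -big_split; apply: eq_bigr => i _; rewrite mxE mulrDl. Qed.

Lemma dotvNl {R : realType} {n} (u w : 'cV[R]_n) : dotv (- u) w = - dotv u w.
Proof. by rewrite !dotvE -sumrN; apply: eq_bigr => i _; rewrite mxE mulNr. Qed.

Lemma dotvZl {R : realType} {n} a (u w : 'cV[R]_n) : dotv (a *: u) w = a * dotv u w.
Proof. by rewrite !dotvE mulr_sumr; apply: eq_bigr => i _; rewrite mxE mulrA. Qed.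

Lemma dotvBl {R : realType} {n} (u v w : 'cV[R]_n) : dotv (u - v) w = dotv u w - dotv v w.
Proof. by rewrite dotvDl dotvNl. Qed.

Lemma dotvDr {R : realType} {n} (u v w : 'cV[R]_n) : dotv w (u + v) = dotv w u + dotv w v.
Proof. by rewrite dotvC dotvDl !(dotvC w). Qed.

Lemma dotvBr {R : realType} {n} (u v w : 'cV[R]_n) : dotv w (u - v) = dotv w u - dotv w v.
Proof. by rewrite dotvC dotvBl !(dotvC w). Qed.

Lemma dotvZr {R : realType} {n} a (u w : 'cV[R]_n) : dotv w (a *: u) = a * dotv w u.
Proof. by rewrite dotvC dotvZl dotvC. Qed.

Lemma dotv_mull {R : realType} {p q} (M : 'M[R]_(p, q)) u v :
  dotv (M *m u) v = dotv u (M^T *m v).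
Proof. by rewrite /dotv trmx_mul mulmxA. Qed.

Lemma dotvv_ge0 {R : realType} {n} (u : 'cV[R]_n) : 0 <= dotv u u.
Proof. by rewrite dotvE; apply: sumr_ge0 => i _; rewrite -expr2 sqr_ge0. Qed.

Lemma dotvv_eq0 {R : realType} {n} (u : 'cV[R]_n) : dotv u u = 0 -> u = 0.
Proof.
rewrite dotvE => H; apply/matrixP => i j; rewrite (ord1 j) mxE.
have /eqP := H; rewrite psumr_eq0 => [/allP Hall|k _]; last by rewrite -expr2 sqr_ge0.
have := Hall i (mem_index_enum i); rewrite /= -expr2 sqrf_eq0 => /eqP //.
Qed.

Lemma normv_ge0 {R : realType} {n} (u : 'cV[R]_n) : 0 <= normv u.
Proof. exact: sqrtr_ge0. Qed.

Lemma normv_sqr {R : realType} {n} (u : 'cV[R]_n) : normv u ^+ 2 = dotv u u.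
Proof. by rewrite /normv sqr_sqrtr // dotvv_ge0. Qed.

Lemma normv_eq0 {R : realType} {n} (u : 'cV[R]_n) : normv u = 0 -> u = 0.
Proof. by move=> H; apply: dotvv_eq0; rewrite -normv_sqr H expr0n. Qed.

Lemma normv0 {R : realType} {n} : normv (0 : 'cV[R]_n) = 0.
Proof. by rewrite /normv dotvE big1 ?sqrtr0 // => i _; rewrite mxE mul0r. Qed.

Lemma dotv0l {R : realType} {n} (v : 'cV[R]_n) : dotv 0 v = 0.
Proof. by rewrite dotvE big1 // => i _; rewrite mxE mul0r. Qed.

Lemma dotv0r {R : realType} {n} (v : 'cV[R]_n) : dotv v 0 = 0.
Proof. by rewrite dotvC dotv0l. Qed.

Lemma CS {R : realType} {n} (u v : 'cV[R]_n) : dotv u v <= normv u * normv v.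
Proof.
have [u0|nu] := eqVneq (normv u) 0; first by rewrite (normv_eq0 _ u0) dotv0l normv0 mul0r.
have [v0|nv] := eqVneq (normv v) 0; first by rewrite (normv_eq0 _ v0) dotv0r normv0 mulr0.
have := dotvv_ge0 (normv v *: u - normv u *: v).
rewrite !(dotvBl, dotvBr, dotvZl, dotvZr) -!normv_sqr (dotvC v u) => H.
have hu : 0 < normv u by rewrite lt_neqAle eq_sym nu normv_ge0.
have hv : 0 < normv v by rewrite lt_neqAle eq_sym nv normv_ge0.
have huv : 0 < normv u * normv v by rewrite mulr_gt0.
rewrite -subr_ge0 -(pmulr_rge0 _ huv); nra.
Qed.

Lemma normvD {R : realType} {n} (u v : 'cV[R]_n) : normv (u + v) <= normv u + normv v.
Proof.
rewrite -(ler_sqr (normv_ge0 _)) ?nnegrE ?addr_ge0 ?normv_ge0 //.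
rewrite normv_sqr !(dotvDl, dotvDr) sqrrD -!normv_sqr (dotvC v u).
have := CS u v; nra.
Qed.

Lemma normvN {R : realType} {n} (u : 'cV[R]_n) : normv (- u) = normv u.
Proof. by rewrite /normv dotvNl dotvC dotvNl opprK. Qed.

Lemma normvZ {R : realType} {n} a (u : 'cV[R]_n) : normv (a *: u) = `|a| * normv u.
Proof. by rewrite /normv dotvZl dotvZr mulrA -expr2 sqrtrM ?sqr_ge0 // sqrtr_sqr. Qed.

Lemma normvB {R : realType} {n} (u v : 'cV[R]_n) : normv (u - v) <= normv u + normv v.
Proof. by rewrite -(normvN v) normvD. Qed.

Lemma normv_sub {R : realType} {n} (u v : 'cV[R]_n) : normv (u - v) = normv (v - u).
Proof. by rewrite -normvN opprB. Qed.

Lemma comp_le {R : realType} {n} (u : 'cV[R]_n) i : `|u i 0| <= normv u.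
Proof.
rewrite -(ler_sqr) ?nnegrE ?normv_ge0 ?normr_ge0 // normv_sqr dotvE real_normK ?num_real //.
rewrite (bigD1 i) //= -expr2 lerDl.
by apply: sumr_ge0 => k _; rewrite -expr2 sqr_ge0.
Qed.



Lemma WplusE {R : realType} {p q} (W : 'M[R]_(p, q)) (z u : 'cV[R]_q) i :
  (Wplus W z *m u) i 0 = if 0 < (W *m z) i 0 then (W *m u) i 0 else 0.
Proof.
rewrite /Wplus -mulmxA mul_diag_mx !mxE.
by case: ifP => _; rewrite ?mul1r ?mul0r.
Qed.

Lemma reluE {R : realType} {p q} (W : 'M[R]_(p, q)) (z : 'cV[R]_q) :
  relu (W *m z) = Wplus W z *m z.
Proof.
apply/matrixP => i j; rewrite (ord1 j) WplusE /relu mxE.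
case: ifP => H; first by rewrite max_l // ltW.
by rewrite max_r // leNgt H.
Qed.

Lemma nsq_Wplus {R : realType} {p q} (W : 'M[R]_(p, q)) (z u : 'cV[R]_q) :
  dotv (Wplus W z *m u) (Wplus W z *m u) =
  \sum_i (if 0 < (W *m z) i 0 then (W *m u) i 0 ^+ 2 else 0).
Proof.
rewrite dotvE; apply: eq_bigr => i _; rewrite WplusE.
by case: ifP; rewrite ?mul0r // expr2.
Qed.

Lemma opnorm_quad {R : realType} {n} (M : 'M[R]_n) e (u : 'cV[R]_n) :
  opnorm_le M e -> `|dotv u (M *m u)| <= e * dotv u u.
Proof.
move=> H; have H1 := H u.
have h1 := CS u (M *m u); have h2 := CS (- u) (M *m u).
rewrite dotvNl normvN in h2.
have hn := normv_ge0 u; have hm := normv_ge0 (M *m u).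
rewrite -normv_sqr; apply/ler_normlP; split; nra.
Qed.

Lemma angle_same {R : realType} {n} (z : 'cV[R]_n) : z != 0 -> angle z z = 0.
Proof.
move=> nz; rewrite /angle -expr2 normv_sqr mulfV ?acos1 //.
by apply/eqP => /dotvv_eq0 /eqP; rewrite (negbTE nz).
Qed.

Lemma Qwdc_same {R : realType} {n} (z : 'cV[R]_n) : z != 0 -> Qwdc z z = 2^-1 *: 1%:M.
Proof.
move=> nz; rewrite /Qwdc angle_same // sin0 mul0r scale0r addr0 subr0.
have hp := pi_gt0 R.
congr (_ *: _); rewrite invfM mulrCA mulfV ?mulr1 //.
by rewrite gt_eqF.
Qed.

Lemma wdc_quad {R : realType} {p q} (W : 'M[R]_(p, q)) eps (z u : 'cV[R]_q) :
  WDC W eps -> z != 0 ->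
  `|dotv (Wplus W z *m u) (Wplus W z *m u) - 2^-1 * dotv u u| <= eps * dotv u u.
Proof.
move=> H nz; have := opnorm_quad _ _ u (H z z nz nz).
rewrite Qwdc_same // mulmxBl scalemx1 mul_scalar_mx dotvBr dotvZr.
by rewrite -mulmxA -dotv_mull dotvC.
Qed.

Lemma wdc_up {R : realType} {p q} (W : 'M[R]_(p, q)) eps (z u : 'cV[R]_q) :
  WDC W eps -> z != 0 ->
  \sum_i (if 0 < (W *m z) i 0 then (W *m u) i 0 ^+ 2 else 0) <= (2^-1 + eps) * dotv u u.
Proof. move=> H nz; have := wdc_quad _ _ _ u H nz; rewrite nsq_Wplus => /ler_normlP [h1 h2]; lra. Qed.

Lemma wdc_lo {R : realType} {p q} (W : 'M[R]_(p, q)) eps (z u : 'cV[R]_q) :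
  WDC W eps -> z != 0 ->
  (2^-1 - eps) * dotv u u <= \sum_i (if 0 < (W *m z) i 0 then (W *m u) i 0 ^+ 2 else 0).
Proof. move=> H nz; have := wdc_quad _ _ _ u H nz; rewrite nsq_Wplus => /ler_normlP [h1 h2]; lra. Qed.

Lemma comp_mul_le {R : realType} {p q} (W : 'M[R]_(p, q)) (u : 'cV[R]_q) i :
  `|(W *m u) i 0| <= (1 + \sum_k \sum_j `|W k j|) * normv u.
Proof.
rewrite mxE; apply: (le_trans (ler_norm_sum _ _ _)).
apply: (@le_trans _ _ (\sum_j `|W i j| * normv u)).
  apply: ler_sum => j _; rewrite normrM; apply: ler_wpM2l => //; exact: comp_le.
rewrite -mulr_suml; apply: ler_wpM2r; first exact: normv_ge0.
rewrite (bigD1 i) //=.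
have : 0 <= \sum_(k < p | k != i) \sum_j `|W k j| by apply: sumr_ge0 => k _; apply: sumr_ge0.
lra.
Qed.



Lemma sign_keep {R : realType} (x h : R) : `|x - h| < `|h| -> (0 < h -> 0 < x) /\ (h < 0 -> x < 0).
Proof.
move=> H; split => hh.
  by rewrite (gtr0_norm hh) in H; move: H; rewrite ltr_norml => /andP [h1 h2]; lra.
by rewrite (ltr0_norm hh) in H; move: H; rewrite ltr_norml => /andP [h1 h2]; lra.
Qed.

Lemma max0_case {R : realType} (X : R) : (X <= 0 /\ Num.max X 0 = 0) \/ (0 < X /\ Num.max X 0 = X).
Proof.
case: (leP X 0) => hx; [left; split => //; rewrite max_r // | right; split => //; rewrite max_l // ltW //].
Qed.

Lemma m2 {R : realType} (X Y : R) : (Num.max X 0 - Num.max Y 0) ^+ 2 <= (X - Y) ^+ 2.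
Proof.
case: (max0_case X) => [[hx ->]|[hx ->]]; case: (max0_case Y) => [[hy ->]|[hy ->]].
- rewrite subrr expr0n /=; exact: sqr_ge0.
- rewrite sub0r sqrrN; nra.
- rewrite subr0; nra.
- by [].
Qed.

Lemma pt_lemma {R : realType} (X Y Hh e1 dl : R) : 0 < dl ->
  (0 < Hh -> 0 < X /\ 0 < Y /\ 0 < e1) ->
  (Hh < 0 -> X < 0 /\ Y < 0 /\ e1 < 0) ->
  (Hh = 0 -> e1 = dl * (X - Y)) ->
  (Num.max X 0 - Num.max Y 0) ^+ 2 <=
  (if 0 < e1 then (X - Y) ^+ 2 else 0) + (if 0 < - e1 then (X - Y) ^+ 2 else 0)
  - (if 0 < - Hh then (X - Y) ^+ 2 else 0).
Proof.
move=> hdl h1 h2 h3.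
case: (ltrgt0P Hh) => hH.
- have [hX [hY he]] := h1 hH.
  rewrite (max_l (ltW hX)) (max_l (ltW hY)).
  by case: (ltrP 0 e1) => ?; case: (ltrP 0 (-e1)) => ?; case: (ltrP 0 (-Hh)) => ?; lra.
- have [hX [hY he]] := h2 hH.
  rewrite (max_r (ltW hX)) (max_r (ltW hY)) subrr expr0n /=.
  by case: (ltrP 0 e1) => ?; case: (ltrP 0 (-e1)) => ?; case: (ltrP 0 (-Hh)) => ?; lra.
- have he := h3 hH; rewrite hH oppr0 ltxx subr0.
  apply: (le_trans (m2 X Y)).
  case: (ltrgt0P (X - Y)) => hv.
  + have hp : 0 < e1 by rewrite he mulr_gt0.
    by case: (ltrP 0 e1) => ?; case: (ltrP 0 (-e1)) => ?; lra.
  + have hp : e1 < 0 by rewrite he pmulr_rlt0.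
    by case: (ltrP 0 e1) => ?; case: (ltrP 0 (-e1)) => ?; lra.
  + by rewrite hv expr0n /=; case: ifP => _; case: ifP => _; rewrite ?addr0.
Qed.

Lemma exists_nz {R : realType} {p q} (W : 'M[R]_(p, q)) eps (h : 'cV[R]_q) :
  WDC W eps -> eps < 2^-1 -> h != 0 -> exists i, (W *m h) i 0 != 0.
Proof.
move=> HW he nh.
case: (boolP [exists i, (W *m h) i 0 != 0]) => [/existsP //|/existsPn Hn].
have := wdc_lo _ _ _ h HW nh.
rewrite big1; last by move=> i _; have := Hn i; rewrite negbK => /eqP ->; rewrite ltxx.
have hp : 0 < dotv h h.
  rewrite lt_neqAle dotvv_ge0 andbT eq_sym; apply/negP => /eqP /dotvv_eq0 /eqP.
  by rewrite (negbTE nh).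
move=> H; exfalso; nra.
Qed.

Lemma Wmul_comp {R : realType} {p q} (W : 'M[R]_(p, q)) (a b : 'cV[R]_q) (c : R) i :
  (W *m (a + c *: b)) i 0 = (W *m a) i 0 + c * (W *m b) i 0.
Proof. by rewrite mulmxDr -scalemxAr !mxE. Qed.

Lemma WmulN_comp {R : realType} {p q} (W : 'M[R]_(p, q)) (a : 'cV[R]_q) i :
  (W *m (- a)) i 0 = - (W *m a) i 0.
Proof. by rewrite mulmxN mxE. Qed.

Lemma WmulB_comp {R : realType} {p q} (W : 'M[R]_(p, q)) (a b : 'cV[R]_q) i :
  (W *m (a - b)) i 0 = (W *m a) i 0 - (W *m b) i 0.
Proof. by rewrite mulmxBr !mxE. Qed.

Lemma relu_sub_comp {R : realType} {n} (X Y : 'cV[R]_n) i :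
  (relu X - relu Y) i 0 = Num.max (X i 0) 0 - Num.max (Y i 0) 0.
Proof. by rewrite !mxE. Qed.

Lemma layer_lip {R : realType} {p q} (W : 'M[R]_(p, q)) eps (h : 'cV[R]_q) :
  WDC W eps -> 0 < eps -> eps < 2^-1 -> h != 0 ->
  exists2 rho : R, 0 < rho & forall a b : 'cV[R]_q,
    normv (a - h) < rho -> normv (b - h) < rho ->
    dotv (relu (W *m a) - relu (W *m b)) (relu (W *m a) - relu (W *m b))
      <= (2^-1 + 3 * eps) * dotv (a - b) (a - b).
Proof.
move=> HW he0 he nh.
have [i0 Hi0] := exists_nz _ _ _ HW he nh.
pose H i := (W *m h) i 0.
pose S : R := 1 + \sum_i `|H i|^-1.
have S_ge1 : 1 <= S by rewrite lerDl; apply: sumr_ge0 => i _; rewrite invr_ge0.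
have S_pos : 0 < S by lra.
have HS : forall i, H i != 0 -> S^-1 <= `|H i|.
  move=> i nzi; have hpos : 0 < `|H i| by rewrite normr_gt0.
  rewrite -[`|H i|]invrK lef_pV2 ?posrE ?invr_gt0 //.
  rewrite /S (bigD1 i) //=.
  have : 0 <= \sum_(j < p | j != i) `|H j|^-1 by apply: sumr_ge0 => j _; rewrite invr_ge0.
  lra.
pose c : R := 1 + \sum_k \sum_j `|W k j|.
have c_pos : 0 < c.
  have : 0 <= \sum_k \sum_j `|W k j| by apply: sumr_ge0 => k _; apply: sumr_ge0.
  rewrite /c; lra.
have sp : forall a : 'cV[R]_q, normv (a - h) < (S * c)^-1 -> forall i, H i != 0 ->
    (0 < H i -> 0 < (W *m a) i 0) /\ (H i < 0 -> (W *m a) i 0 < 0).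
  move=> a ha i nzi; apply: sign_keep.
  rewrite -WmulB_comp; apply: (le_lt_trans (comp_mul_le _ _ _)).
  apply: (lt_le_trans _ (HS i nzi)).
  have -> : S^-1 = c * (S * c)^-1 by field; rewrite !gt_eqF.
  by rewrite ltr_pM2l.
exists (S * c)^-1; first by rewrite invr_gt0 mulr_gt0.
move=> a b ha hb.
pose v := a - b.
pose V i := (W *m v) i 0.
pose dl : R := (S * (1 + \sum_i `|V i|))^-1.
have hsV : 0 <= \sum_i `|V i| by apply: sumr_ge0.
have dl_pos : 0 < dl by rewrite invr_gt0 mulr_gt0 //; lra.
have hdl : forall i, H i != 0 -> `|dl * V i - 0| < `|H i|.
  move=> i nzi; rewrite subr0; apply: (lt_le_trans _ (HS i nzi)).
  rewrite normrM (gtr0_norm dl_pos).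
  have hVi : `|V i| < 1 + \sum_i `|V i|.
    rewrite (bigD1 i) //=.
    have : 0 <= \sum_(j < p | j != i) `|V j| by apply: sumr_ge0.
    lra.
  have -> : S^-1 = dl * (1 + \sum_i `|V i|) by rewrite /dl; field; rewrite gt_eqF //; lra.
  by rewrite ltr_pM2l.
pose z1 := h + dl *: v.
have Ez1 : forall i, (W *m z1) i 0 = H i + dl * V i by move=> i; rewrite Wmul_comp.
have sz1 : forall i, H i != 0 -> (0 < H i -> 0 < H i + dl * V i) /\ (H i < 0 -> H i + dl * V i < 0).
  move=> i nzi; apply: sign_keep.
  have -> : H i + dl * V i - H i = dl * V i - 0 by rewrite subr0 addrC addKr.
  exact: hdl.
have nz1 : z1 != 0.
  apply/negP => /eqP z10; have := Ez1 i0; rewrite z10 mulmx0 mxE => E.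
  have [s1 s2] := sz1 i0 Hi0.
  case: (ltrgt0P (H i0)) => hh.
  + by have := s1 hh; rewrite -E ltxx.
  + by have := s2 hh; rewrite -E ltxx.
  + by move: Hi0; rewrite -/(H i0) hh eqxx.
have nz2 : - z1 != 0 by rewrite oppr_eq0.
have nz3 : - h != 0 by rewrite oppr_eq0.
have U1 := wdc_up _ _ _ v HW nz1.
have U2 := wdc_up _ _ _ v HW nz2.
have L3 := wdc_lo _ _ _ v HW nz3.
have key : dotv (relu (W *m a) - relu (W *m b)) (relu (W *m a) - relu (W *m b)) <=
   \sum_i (if 0 < (W *m z1) i 0 then (W *m v) i 0 ^+ 2 else 0)
 + \sum_i (if 0 < (W *m - z1) i 0 then (W *m v) i 0 ^+ 2 else 0)
 - \sum_i (if 0 < (W *m - h) i 0 then (W *m v) i 0 ^+ 2 else 0).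
  rewrite dotvE -big_split -sumrB /=; apply: ler_sum => i _.
  rewrite relu_sub_comp -expr2 !WmulN_comp Ez1 -/(H i) /v WmulB_comp.
  apply: (pt_lemma _ _ _ _ dl) => //.
  - move=> hh; have hn : H i != 0 by rewrite gt_eqF.
    have [sa _] := sp a ha i hn; have [sb _] := sp b hb i hn; have [s1 _] := sz1 i hn.
    by split; [exact: sa hh|split; [exact: sb hh|exact: s1 hh]].
  - move=> hh; have hn : H i != 0 by rewrite lt_eqF.
    have [_ sa] := sp a ha i hn; have [_ sb] := sp b hb i hn; have [_ s1] := sz1 i hn.
    by split; [exact: sa hh|split; [exact: sb hh|exact: s1 hh]].
  - by move=> hh; rewrite hh add0r /V /v WmulB_comp.
apply: (le_trans key); rewrite -/v; lra.
Qed.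



Lemma normv_le_dot {R : realType} {n m} (a : 'cV[R]_n) (b : 'cV[R]_m) :
  dotv a a <= dotv b b -> normv a <= normv b.
Proof. exact: ler_wsqrtr. Qed.

Lemma min_le_l {R : realType} (a b : R) : Num.min a b <= a.
Proof. by rewrite ge_min lexx. Qed.
Lemma min_le_r {R : realType} (a b : R) : Num.min a b <= b.
Proof. by rewrite ge_min lexx orbT. Qed.

Lemma relu0 {R : realType} {n} : relu (0 : 'cV[R]_n) = 0.
Proof. by apply/matrixP => i j; rewrite !mxE maxxx. Qed.

Lemma net_up {R : realType} (d : nat) (dims : nat -> nat)
  (W : forall i, 'M[R]_(dims i.+1, dims i)) eps :
  (forall i, (i < d)%N -> WDC (W i) eps) -> 0 < eps ->
  forall j, (j <= d)%N -> forall x,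
  dotv (netG W j x) (netG W j x) <= (2^-1 + eps) ^+ j * dotv x x.
Proof.
move=> HW he; elim=> [|j IH] hj x; first by rewrite expr0 mul1r.
rewrite /= reluE.
have hj' : (j <= d)%N by apply: ltnW.
have IH' := IH hj' x.
have [z0|nz] := eqVneq (netG W j x) 0.
  rewrite z0 mulmx0 dotv0l; apply: mulr_ge0; [apply: exprn_ge0; lra|exact: dotvv_ge0].
rewrite nsq_Wplus exprS -mulrA; apply: (le_trans (wdc_up _ _ _ _ (HW j hj) nz)).
by apply: ler_wpM2l => //; lra.
Qed.

Lemma net_nz {R : realType} (d : nat) (dims : nat -> nat)
  (W : forall i, 'M[R]_(dims i.+1, dims i)) eps :
  (forall i, (i < d)%N -> WDC (W i) eps) -> 0 < eps -> eps < 2^-1 ->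
  forall j, (j <= d)%N -> forall x, x != 0 -> netG W j x != 0.
Proof.
move=> HW he he2; elim=> [|j IH] hj x nx //.
rewrite /= reluE.
have hj' : (j <= d)%N by apply: ltnW.
have nz := IH hj' x nx.
have L := wdc_lo _ _ _ (netG W j x) (HW j hj) nz.
rewrite -nsq_Wplus in L.
apply/negP => /eqP E; rewrite E dotv0l in L.
have : 0 < dotv (netG W j x) (netG W j x).
  rewrite lt_neqAle dotvv_ge0 andbT eq_sym; apply/negP => /eqP /dotvv_eq0 /eqP.
  by rewrite (negbTE nz).
nra.
Qed.

Lemma net_lip {R : realType} (d : nat) (dims : nat -> nat)
  (W : forall i, 'M[R]_(dims i.+1, dims i)) eps :
  (forall i, (i < d)%N -> WDC (W i) eps) -> 0 < eps -> eps < 8^-1 ->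
  forall j, (j <= d)%N -> forall x, x != 0 ->
  exists2 rho : R, 0 < rho & forall y z,
    normv (y - x) < rho -> normv (z - x) < rho ->
    dotv (netG W j y - netG W j z) (netG W j y - netG W j z)
      <= (2^-1 + 3 * eps) ^+ j * dotv (y - z) (y - z).
Proof.
move=> HW he he2; elim=> [|j IH] hj x nx.
  by exists 1 => // y z _ _; rewrite expr0 mul1r.
have hj' : (j <= d)%N by apply: ltnW.
have [rho1 hr1 H1] := IH hj' x nx.
have nz := @net_nz R d dims W eps HW he (ltac:(lra)) j hj' x nx.
have [rho2 hr2 H2] := layer_lip _ _ _ (HW j hj) he (ltac:(lra)) nz.
have hr : 0 <= (2^-1 + 3 * eps) ^+ j by apply: exprn_ge0; lra.
have hr1' : (2^-1 + 3 * eps) ^+ j <= 1 by apply: exprn_ile1; lra.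
have close : forall y, normv (y - x) < Num.min rho1 rho2 -> normv (netG W j y - netG W j x) < rho2.
  move=> y hy; apply: (le_lt_trans _ (lt_le_trans hy (min_le_r _ _))).
  apply: normv_le_dot; apply: (le_trans (H1 y x _ _)).
  - exact: (lt_le_trans hy (min_le_l _ _)).
  - by rewrite subrr normv0.
  - have := dotvv_ge0 (y - x); nra.
exists (Num.min rho1 rho2); first by rewrite lt_min hr1 hr2.
move=> y z hy hz /=.
apply: (le_trans (H2 _ _ (close y hy) (close z hz))).
rewrite exprS -mulrA; apply: ler_wpM2l; first lra.
apply: H1.
- exact: (lt_le_trans hy (min_le_l _ _)).
- exact: (lt_le_trans hz (min_le_l _ _)).
Qed.



Lemma Phi_same {R : realType} {n} (z : 'cV[R]_n) : z != 0 -> Phi z z = 1%:M.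
Proof.
move=> nz; rewrite /Phi nz /= angle_same // sin0 mulr0 mul0r scale0r addr0 subr0.
rewrite mulfV ?scale1r //; exact: lt0r_neq0 (pi_gt0 R).
Qed.

Lemma AsgnE {R : realType} {m n} (A : 'M[R]_(m, n)) (z u : 'cV[R]_n) i :
  (Asgn A z *m u) i 0 = Num.sg ((A *m z) i 0) * (A *m u) i 0.
Proof. by rewrite /Asgn -mulmxA mul_diag_mx !mxE. Qed.

Lemma rrcp_one {R : realType} {m k n} (A : 'M[R]_(m, n)) (G : 'cV[R]_k -> 'cV[R]_n) eps p p1 p2 :
  0 < eps -> RRCP A G eps ->
  \sum_i (Num.sg ((A *m G p) i 0) * (A *m (G p1 - G p2)) i 0) ^+ 2
    <= (1 + 33 * eps) * dotv (G p1 - G p2) (G p1 - G p2).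
Proof.
move=> he H; have := H p p p1 p2 p1 p2.
set u := G p1 - G p2.
have E : dotv ((Asgn A (G p))^T *m Asgn A (G p) *m u) u =
   \sum_i (Num.sg ((A *m G p) i 0) * (A *m u) i 0) ^+ 2.
  rewrite -mulmxA dotvC -dotv_mull dotvE; apply: eq_bigr => i _.
  by rewrite AsgnE expr2.
have hn : normv u * normv u = dotv u u by rewrite -expr2 normv_sqr.
have [z0|nz] := eqVneq (G p) 0.
  move=> _; rewrite big1; first by apply: mulr_ge0; [lra|exact: dotvv_ge0].
  by move=> i _; rewrite z0 mulmx0 mxE sgr0 mul0r expr0n.
rewrite Phi_same // mulmxBl dotvBl E mul1mx -mulrA hn => /ler_normlP [h1 h2]; lra.
Qed.

Lemma abs_pt {R : realType} (c d : R) :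
  (`|c| - `|d|) ^+ 2 <= (Num.sg c * (c - d)) ^+ 2 + (Num.sg d * (c - d)) ^+ 2.
Proof.
have hs : (`|c| - `|d|) ^+ 2 <= (c - d) ^+ 2.
  rewrite -[X in X <= _]real_normK ?num_real // -[X in _ <= X]real_normK ?num_real //.
  rewrite ler_sqr ?nnegrE ?normr_ge0 //; exact: ler_dist_dist.
have sq : forall x y : R, x != 0 -> (Num.sg x * y) ^+ 2 = y ^+ 2.
  by move=> x y nx; rewrite exprMn sqr_sg nx mul1r.
have [c0|nc] := eqVneq c 0; last first.
  by rewrite (sq _ _ nc); have := sqr_ge0 (Num.sg d * (c - d)); lra.
have [d0|nd] := eqVneq d 0; last first.
  by rewrite (sq _ _ nd); have := sqr_ge0 (Num.sg c * (c - d)); lra.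
by rewrite c0 d0 normr0 subrr expr0n /= sgr0 mul0r expr0n addr0.
Qed.

Lemma absv_sub_comp {R : realType} {n} (X Y : 'cV[R]_n) i :
  (absv X - absv Y) i 0 = `|X i 0| - `|Y i 0|.
Proof. by rewrite !mxE. Qed.

Lemma A_lip {R : realType} {m k n} (A : 'M[R]_(m, n)) (G : 'cV[R]_k -> 'cV[R]_n) eps p q :
  0 < eps -> RRCP A G eps ->
  dotv (absv (A *m G p) - absv (A *m G q)) (absv (A *m G p) - absv (A *m G q))
    <= 2 * (1 + 33 * eps) * dotv (G p - G q) (G p - G q).
Proof.
move=> he H.
have h1 := rrcp_one A G eps p p q he H.
have h2 := rrcp_one A G eps q p q he H.
rewrite dotvE.
apply: (@le_trans _ _ (\sum_i ((Num.sg ((A *m G p) i 0) * (A *m (G p - G q)) i 0) ^+ 2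
     + (Num.sg ((A *m G q) i 0) * (A *m (G p - G q)) i 0) ^+ 2))).
  apply: ler_sum => i _; rewrite absv_sub_comp -expr2 WmulB_comp; exact: abs_pt.
rewrite big_split /=; lra.
Qed.



Lemma pow_bound {R : realType} (a : R) n : 0 <= a -> (1 + a) ^+ n * (1 - n%:R * a) <= 1.
Proof.
move=> ha; elim: n => [|n IH]; first by rewrite expr0 mul0r subr0 mulr1.
apply: le_trans IH; rewrite exprSr -mulrA; apply: ler_wpM2l; first by apply: exprn_ge0; lra.
rewrite -natr1; have hn : 0 <= (n%:R : R) by []; nra.
Qed.

Lemma num_facts {R : realType} (d : nat) (eps : R) :
  (0 < d)%N -> 0 < eps -> 100 * (d%:R) ^+ 3 * Num.sqrt eps <= 1 ->
  eps < 8^-1 /\ (1 + 33 * eps) * (1 + 6 * eps) ^+ d <= 2.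
Proof.
move=> hd he hK.
have d1 : 1 <= (d%:R : R) by rewrite ler1n.
set s := Num.sqrt eps in hK.
have hs : 0 <= s by apply: sqrtr_ge0.
have hs2 : s ^+ 2 = eps by rewrite sqr_sqrtr // ltW.
set D := (d%:R : R) in d1 hK *.
have hD3 : D <= D ^+ 3 by rewrite !exprS expr0 mulr1; nra.
have h1 : 100 * D * s <= 1 by nra.
have h2 : eps * D <= 10000^-1.
  rewrite -hs2; have : (100 * D * s) ^+ 2 <= 1 by rewrite -(expr1n _ 2) ler_sqr ?nnegrE; nra.
  nra.
have he1 : eps <= 10000^-1 by nra.
split; first lra.
have P := pow_bound (6 * eps) d (ltac:(lra)).
set Q := (1 + 6 * eps) ^+ d in P *.
have hQ : 0 <= Q by apply: exprn_ge0; lra.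
rewrite -/D in P.
nra.
Qed.

Lemma sq_diff {R : realType} {n} (a b : 'cV[R]_n) :
  2^-1 * normv a ^+ 2 - 2^-1 * normv b ^+ 2 <= 2^-1 * normv (a - b) * (normv a + normv b).
Proof.
have h1 : normv a <= normv (a - b) + normv b by have := normvD (a - b) b; rewrite subrK.
have := normv_ge0 a; have := normv_ge0 b; have := normv_ge0 (a - b); nra.
Qed.

Lemma sqrt_le_mul {R : realType} (a b L : R) : 0 <= L -> a <= L * b -> Num.sqrt a <= Num.sqrt L * Num.sqrt b.
Proof. by move=> hL hab; rewrite -sqrtrM //; apply: ler_wsqrtr. Qed.

Theorem lemma3 (R : realType) :
  exists K C : R, 0 < K /\ 0 < C /\
  forall (d : nat) (dims : nat -> nat) (m : nat)
         (W : forall i, 'M[R]_(dims i.+1, dims i))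
         (A : 'M[R]_(m, dims d)) (eps : R),
    (0 < d)%N ->
    (forall i, (i < d)%N -> (dims i < dims i.+1)%N) ->
    0 < eps ->
    K * (d%:R) ^+ 3 * Num.sqrt eps <= 1 ->
    RRCP A (netG W d) eps ->
    (forall i, (i < d)%N -> WDC (W i) eps) ->
    forall (xs : 'cV[R]_(dims 0)) (eta : 'cV[R]_m) (x v : 'cV[R]_(dims 0)),
      xs != 0 -> x != 0 ->
      clarke_subdiff (loss A (netG W d) (absv (A *m netG W d xs) + eta)) x v ->
      normv v <= C * d%:R / 2 ^+ d * Num.max (normv x) (normv xs)
                 + 2 / (Num.sqrt 2) ^+ d * normv eta.
Proof.
exists 100, 8; split; first lra; split; first lra.
move=> d dims m W A eps hd _ he hK HA HW xs eta x xi nxs nx Hc.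
have [he8 hnum] := num_facts d eps hd he hK.
have [rho hrho HL] := @net_lip R d dims W eps HW he he8 d (leqnn d) x nx.
have HU := @net_up R d dims W eps HW he d (leqnn d).
set G := netG W d in HA HL HU Hc *.
pose r2 : R := 2^-1 + 3 * eps.
pose L2 : R := r2 ^+ d.
pose sL := Num.sqrt L2.
pose sU := Num.sqrt ((2^-1 + eps) ^+ d).
pose al : R := 2 * (1 + 33 * eps).
pose sA := Num.sqrt al.
have hL2 : 0 <= L2 by apply: exprn_ge0; rewrite /r2; lra.
have hU2 : 0 <= (2^-1 + eps) ^+ d by apply: exprn_ge0; lra.
have hal : 0 <= al by rewrite /al; lra.
have sL0 : 0 <= sL by apply: sqrtr_ge0.
have sU0 : 0 <= sU by apply: sqrtr_ge0.
have sA0 : 0 <= sA by apply: sqrtr_ge0.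
have NL : forall y z, normv (y - x) < rho -> normv (z - x) < rho ->
    normv (G y - G z) <= sL * normv (y - z).
  by move=> y z hy hz; apply: sqrt_le_mul => //; apply: HL.
have NU : forall z, normv (G z) <= sU * normv z.
  by move=> z; apply: sqrt_le_mul => //; apply: HU.
have NA : forall p q, normv (absv (A *m G p) - absv (A *m G q)) <= sA * normv (G p - G q).
  by move=> p q; apply: sqrt_le_mul => //; apply: A_lip.
pose g y := absv (A *m G y) - (absv (A *m G xs) + eta).
pose B0 := sA * (sU * normv x + sU * normv xs) + normv eta.
pose M := sA * sL.
have M0 : 0 <= M by apply: mulr_ge0.
have B00 : 0 <= B0 by rewrite /B0; apply: addr_ge0; [apply: mulr_ge0 => //; apply: addr_ge0; apply: mulr_ge0 => //; apply: normv_ge0|apply: normv_ge0].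
have ng : forall y, normv (y - x) < rho -> normv (g y) <= M * normv (y - x) + B0.
  move=> y hy.
  have E : g y = (absv (A *m G y) - absv (A *m G xs)) - eta by rewrite /g opprD addrA.
  rewrite E; apply: (le_trans (normvB _ _)).
  have h1 := NA y xs.
  have h2 : normv (G y - G xs) <= sL * normv (y - x) + sU * normv x + sU * normv xs.
    have -> : G y - G xs = (G y - G x) + (G x - G xs) by rewrite addrA subrK.
    apply: (le_trans (normvD _ _)).
    have h3 := NL y x hy (ltac:(by rewrite subrr normv0)).
    have h4 := normvB (G x) (G xs).
    have h5 := NU x; have h6 := NU xs.
    lra.
  rewrite /M /B0.
  have : sA * normv (G y - G xs) <= sA * (sL * normv (y - x) + sU * normv x + sU * normv xs).
    by apply: ler_wpM2l.
  lra.
have dg : forall y z, normv (y - x) < rho -> normv (z - x) < rho ->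
    normv (g y - g z) <= M * normv (y - z).
  move=> y z hy hz.
  have -> : g y - g z = absv (A *m G y) - absv (A *m G z) by rewrite /g opprB addrA subrK.
  apply: (le_trans (NA y z)); rewrite /M -mulrA; apply: ler_wpM2l => //; exact: NL.
pose N := normv xi.
have N0 : 0 <= N by apply: normv_ge0.
have main : N ^+ 2 <= M * N * B0.
  apply/ler_addgt0Pr => e he'.
  pose Z := 1 + M * M * N * (1 + N).
  have Z1 : 1 <= Z by rewrite /Z lerDl; apply: mulr_ge0; [apply: mulr_ge0; [apply: mulr_ge0|]|]; lra.
  pose dl := Num.min (rho / (1 + N)) ((e / 2) / Z).
  have dl0 : 0 < dl by rewrite lt_min; apply/andP; split; apply: divr_gt0; lra.
  have hd1 : dl * (1 + N) <= rho.
    rewrite -ler_pdivlMr; last lra.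
    exact: min_le_l.
  have hd2 : dl * Z <= e / 2.
    rewrite -ler_pdivlMr; last lra.
    exact: min_le_r.
  have [y [t [hy [/andP [ht0 htd] hq]]]] := Hc xi (e / 2) dl (ltac:(lra)) dl0.
  rewrite /loss -/(g (y + t *: xi)) -/(g y) in hq.
  pose y' := y + t *: xi.
  have hyx : normv (y - x) < rho.
    apply: (lt_le_trans hy); apply: le_trans hd1; nra.
  have hy'x1 : normv (y' - x) <= normv (y - x) + t * N.
    have -> : y' - x = (y - x) + t *: xi by rewrite /y' addrAC.
    apply: (le_trans (normvD _ _)); rewrite normvZ gtr0_norm //.
  have hy'x : normv (y' - x) < rho.
    apply: (le_lt_trans hy'x1); apply: (lt_le_trans _ hd1).
    have := normv_ge0 (y - x); nra.
  have hfd := sq_diff (g y') (g y).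
  have hg1 := ng y' hy'x; have hg2 := ng y hyx.
  have hgd := dg y' y hy'x hyx.
  have Ey : y' - y = t *: xi by rewrite /y' addrAC subrr add0r.
  move: hgd; rewrite Ey normvZ gtr0_norm // -/N => hgd.
  have hq' : dotv xi xi - e / 2 < (2^-1 * normv (g y') ^+ 2 - 2^-1 * normv (g y) ^+ 2) / t by [].
  rewrite ltr_pdivlMr // in hq'.
  have hNN : dotv xi xi = N ^+ 2 by rewrite normv_sqr.
  rewrite hNN in hq'.
  have hgy0 := normv_ge0 (g y); have hgy'0 := normv_ge0 (g y').
  have hn1 := normv_ge0 (y - x).
  have hdiff : normv (g y') + normv (g y) <= 2 * B0 + M * (2 * dl * (1 + N)).
    have : normv (y - x) <= dl * (1 + N) by nra.
    have : normv (y' - x) <= dl * (1 + N) by nra.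
    nra.
  have hprod : 2^-1 * normv (g y' - g y) * (normv (g y') + normv (g y))
      <= 2^-1 * (M * (t * N)) * (2 * B0 + M * (2 * dl * (1 + N))).
    apply: ler_pM; [|apply: addr_ge0 => //| apply: ler_wpM2l; lra |exact: hdiff].
    apply: mulr_ge0; [lra|exact: normv_ge0].
  have hZ : M * M * N * (dl * (1 + N)) <= e / 2.
    apply: le_trans hd2; rewrite /Z; nra.
  nra.
have MB0 : N <= M * B0.
  have [N00|Npos] := eqVneq N 0; first by rewrite N00; apply: mulr_ge0.
  have hNp : 0 < N by rewrite lt_neqAle eq_sym Npos.
  rewrite -(ler_pM2r hNp); nra.
have hsUL : sU <= sL.
  apply: ler_wsqrtr; apply: lerXn2r; rewrite ?nnegrE /r2; lra.
have hLL : sL * sL = L2 by rewrite -expr2 sqr_sqrtr.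
have hAA : sA * sA = al by rewrite -expr2 sqr_sqrtr.
have h2d : (0 : R) < 2 ^+ d by apply: exprn_gt0.
have hL2e : L2 = (1 + 6 * eps) ^+ d / 2 ^+ d.
  by rewrite /L2 /r2 -expr_div_n; congr (_ ^+ _); field.
have hkey : al * L2 <= 4 / 2 ^+ d.
  rewrite hL2e /al mulrA ler_pM2r ?invr_gt0 //; lra.
have hmax1 : normv x <= Num.max (normv x) (normv xs) by rewrite le_max lexx.
have hmax2 : normv xs <= Num.max (normv x) (normv xs) by rewrite le_max lexx orbT.
have hd1 : (1 : R) <= d%:R by rewrite ler1n.
have t1 : sA * sL * (sA * (sU * normv x + sU * normv xs))
   <= 8 * d%:R / 2 ^+ d * Num.max (normv x) (normv xs).
  have -> : sA * sL * (sA * (sU * normv x + sU * normv xs)) = al * (sL * sU) * (normv x + normv xs).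
    by rewrite -hAA; ring.
  have hsLU : sL * sU <= L2 by rewrite -hLL; apply: ler_wpM2l.
  have hnx := normv_ge0 x; have hnxs := normv_ge0 xs.
  have hA1 : al * (sL * sU) <= 4 / 2 ^+ d.
    apply: le_trans hkey; apply: ler_wpM2l => //.
  have hsLU0 : 0 <= sL * sU by apply: mulr_ge0.
  have hi : 0 < (2 ^+ d : R)^-1 by rewrite invr_gt0.
  have hmx : 0 <= Num.max (normv x) (normv xs) by lra.
  apply: (@le_trans _ _ ((4 / 2 ^+ d) * (2 * Num.max (normv x) (normv xs)))).
    apply: ler_pM; [exact: mulr_ge0|lra|exact: hA1|lra].
  set I2 := (2 ^+ d : R)^-1 in hi *.
  set mx := Num.max (normv x) (normv xs) in hmx *.
  have := mulr_ge0 (ltW hi) hmx.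
  nra.
have t2 : sA * sL <= 2 / Num.sqrt 2 ^+ d.
  have hs2 : 0 < Num.sqrt (2 : R) by rewrite sqrtr_gt0.
  have hsd : 0 < Num.sqrt (2 : R) ^+ d by apply: exprn_gt0.
  rewrite -(ler_sqr) ?nnegrE; last 2 first.
  - by apply: mulr_ge0.
  - by apply: divr_ge0 => //; apply: ltW.
  rewrite exprMn !sqr_sqrtr // expr_div_n -exprM mulnC exprM sqr_sqrtr //.
  have h4 : (2 : R) ^+ 2 = 4 by rewrite expr2; lra.
  by rewrite h4.
have hne := normv_ge0 eta.
apply: (le_trans MB0); rewrite /M /B0 mulrDr.
apply: lerD => //.
by apply: ler_wpM2r.
Qed.
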